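(* Let $H$ be a Hopf algebra with antipode $S$, projective as a $k$-module, $A$ a left $H$-comodule algebra, and $\varphi:H\to A$ a left $H$-colinear map with $\varphi(1_H)=1_A$. Assume one of: (1) $S^2=I_H$, $\varphi(H)\subseteq Z(A)$ and $\varphi(hl)=\varphi(lh)$ for all $h,l\in H$; or (2) $S$ is bijective and $\varphi(H)\subseteq k1_A$. Then $\gamma^\varphi(h)(l)=\varphi(hS(l))$ defines a total $A$-integral for $(H,A,H)$, and the forgetful functor ${}^H\mathcal M_A\to\mathcal M_A$ is separable.
   Context: $k$ commutative ring; Sweedler notation $\Delta(h)=\sum h_{(1)}\otimes h_{(2)}$, $\rho_A(a)=\sum a_{<-1>}\otimes a_{<0>}$. ${}^H\mathcal M_A$ (relative Hopf modules) is the category of right $A$-modules $M$ with a left $H$-coaction such that $\rho_M(ma)=\sum m_{<-1>}a_{<-1>}\otimes m_{<0>}a_{<0>}$, with $A$-linear $H$-colinear maps. An $A$-integral for the Doi-Hopf datum $(H,A,H)$ ($H$ acting on itself by multiplication) is a $k$-linear $\gamma:H\to\mathrm{Hom}(H,A)$ with, for all $a\in A$, $c,d\in H$: (i) $\sum a_{<0>}\gamma(ca_{<-2>})(da_{<-1>})=\gamma(c)(d)\,a$; (ii) $\sum c_{(1)}\otimes\gamma(c_{(2)})(d)=\sum d_{(2)}\gamma(c)(d_{(1)})_{<-1>}\otimes\gamma(c)(d_{(1)})_{<0>}$; total if $\sum\gamma(c_{(1)})(c_{(2)})=\varepsilon(c)1_A$. A functor $F$ is separable if $\mathrm{Hom}(M,N)\to\mathrm{Hom}(FM,FN)$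 has a left inverse natural in $M,N$. *)

(* Defs.v *)
(* Tensors U (x)_k V are represented by finite lists of pairs (sums of
   simple tensors); two such lists represent the same tensor iff every
   k-bilinear map into every k-module takes the same value on them
   (universal property / Yoneda). *)
From HB Require Import structures.
From mathcomp Require Import all_boot all_order all_algebra.
Set Implicit Arguments. Unset Strict Implicit. Unset Printing Implicit Defensive.
Import GRing.Theory.
Local Open Scope ring_scope.

Section Defs.
Variable k : comPzRingType.

Definition klin (U V : lmodType k) (f : U -> V) :=
  forall (a : k) (u v : U), f (a *: u + v) = a *: f u + f v.

Definition kbilin (U V M : lmodType k) (b : U -> V -> M) :=
  (forall v, klin (fun u => b u v)) /\ (forall u, klin (b u)).

Definition ktrilin (U V W M : lmodType k) (b : U -> V -> W -> M) :=
  (forall v w, klin (fun u => b u v w)) /\ (forall u w, klin (fun v => b u v w))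
  /\ (forall u v, klin (b u v)).

Definition teq2 (U V : lmodType k) (t t' : seq (U * V)) :=
  forall (M : lmodType k) (b : U -> V -> M), kbilin b ->
    \sum_(p <- t) b p.1 p.2 = \sum_(p <- t') b p.1 p.2.

Definition teq3 (U V W : lmodType k) (t t' : seq (U * V * W)) :=
  forall (M : lmodType k) (b : U -> V -> W -> M), ktrilin b ->
    \sum_(p <- t) b p.1.1 p.1.2 p.2 = \sum_(p <- t') b p.1.1 p.1.2 p.2.

Definition tlin (U U' V' : lmodType k) (f : U -> seq (U' * V')) :=
  forall (a : k) (u v : U),
    teq2 (f (a *: u + v)) ([seq (a *: p.1, p.2) | p <- f u] ++ f v).

Definition kprojective (P : lmodType k) :=
  forall (M N : lmodType k) (f : M -> N) (g : P -> N),
    klin f -> klin g -> (forall y, exists x, f x = y) ->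
    exists h : P -> M, klin h /\ forall x, f (h x) = g x.

Section Hopf.
Variable H : algType k.
Variables (Delta : H -> seq (H * H)) (eps : H -> k) (S : H -> H).

Definition is_hopf :=
  tlin Delta /\
  (forall h, teq3 [seq (p.1, q.1, q.2) | p <- Delta h, q <- Delta p.2]
                  [seq (q.1, q.2, p.2) | p <- Delta h, q <- Delta p.1]) /\
  klin (eps : H -> k^o) /\
  (forall h, \sum_(p <- Delta h) eps p.1 *: p.2 = h) /\
  (forall h, \sum_(p <- Delta h) eps p.2 *: p.1 = h) /\
  (forall h l, teq2 (Delta (h * l))
                    [seq (p.1 * q.1, p.2 * q.2) | p <- Delta h, q <- Delta l]) /\
  teq2 (Delta 1) [:: (1, 1)] /\
  (forall h l, eps (h * l) = eps h * eps l) /\ eps 1 = 1 /\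
  klin S /\
  (forall h, \sum_(p <- Delta h) S p.1 * p.2 = (eps h)%:A) /\
  (forall h, \sum_(p <- Delta h) p.1 * S p.2 = (eps h)%:A).

Variable A : algType k.
Variable rhoA : A -> seq (H * A).

Definition is_comod_alg :=
  [/\ tlin rhoA,
      forall a, teq3 [seq (q.1, q.2, p.2) | p <- rhoA a, q <- Delta p.1]
                     [seq (p.1, q.1, q.2) | p <- rhoA a, q <- rhoA p.2],
      forall a, \sum_(p <- rhoA a) eps p.1 *: p.2 = a,
      forall a b, teq2 (rhoA (a * b))
                       [seq (p.1 * q.1, p.2 * q.2) | p <- rhoA a, q <- rhoA b] &
      teq2 (rhoA 1) [:: (1, 1)]].

(* A-integral for the Doi-Hopf datum (H,A,H); gamma c d stands for gamma(c)(d) *)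
Definition is_A_integral (gamma : H -> H -> A) :=
  [/\ kbilin gamma,
      forall a c d,
        \sum_(p <- [seq (q.1, q.2, p.2) | p <- rhoA a, q <- Delta p.1])
            p.2 * gamma (c * p.1.1) (d * p.1.2) = gamma c d * a &
      forall c d,
        teq2 [seq (p.1, gamma p.2 d) | p <- Delta c]
             [seq (p.2 * q.1, q.2) | p <- Delta d, q <- rhoA (gamma c p.1)]].

Definition is_total_A_integral (gamma : H -> H -> A) :=
  is_A_integral gamma /\
  forall c, \sum_(p <- Delta c) gamma p.1 p.2 = (eps c)%:A.

Record relHopfMod := RelHopfMod {
  rhm_car :> lmodType k;
  rhm_act : rhm_car -> A -> rhm_car;
  rhm_coact : rhm_car -> seq (H * rhm_car);
  rhm_act_bilin : kbilin rhm_act;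
  rhm_act1 : forall m, rhm_act m 1 = m;
  rhm_actM : forall m a b, rhm_act (rhm_act m a) b = rhm_act m (a * b);
  rhm_coact_lin : tlin rhm_coact;
  rhm_coassoc : forall m,
    teq3 [seq (q.1, q.2, p.2) | p <- rhm_coact m, q <- Delta p.1]
         [seq (p.1, q.1, q.2) | p <- rhm_coact m, q <- rhm_coact p.2];
  rhm_counit : forall m, \sum_(p <- rhm_coact m) eps p.1 *: p.2 = m;
  rhm_compat : forall m a,
    teq2 (rhm_coact (rhm_act m a))
         [seq (p.1 * q.1, rhm_act p.2 q.2) | p <- rhm_coact m, q <- rhoA a]
}.

Definition Alin (M N : relHopfMod) (f : M -> N) :=
  klin f /\ forall m a, f (rhm_act m a) = rhm_act (f m) a.

Definition relHopf_hom (M N : relHopfMod) (f : M -> N) :=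
  Alin f /\
  forall m, teq2 (rhm_coact (f m)) [seq (p.1, f p.2) | p <- rhm_coact m].

(* separability of the forgetful functor ^H M_A -> M_A :
   the map Hom_{^H M_A}(M,N) -> Hom_A(M,N) has a left inverse P,
   natural in M and N. *)
Definition forget_separable :=
  exists P : forall M N : relHopfMod, (M -> N) -> (M -> N),
    [/\ (forall (M N : relHopfMod) (f : M -> N), Alin f -> relHopf_hom (P M N f)),
        (forall (M N : relHopfMod) (f : M -> N), relHopf_hom f ->
            forall m, P M N f m = f m) &
        (forall (M' M N N' : relHopfMod) (g : M' -> M) (f : M -> N) (h : N -> N'),
            relHopf_hom g -> Alin f -> relHopf_hom h ->
            forall m, P M' N' (fun x => h (f (g x))) m = h (P M N f (g m)))].

End Hopf.
End Defs.

(* Main.v *)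
Require Import Defs.
From HB Require Import structures.
From mathcomp Require Import all_boot all_order all_algebra.
Set Implicit Arguments. Unset Strict Implicit. Unset Printing Implicit Defensive.
Import GRing.Theory.
Local Open Scope ring_scope.

Section Generic.
Variable k : comPzRingType.
Implicit Types U V W M : lmodType k.

Lemma klin_of U V (f : U -> V) :
  (forall a u, f (a *: u) = a *: f u) -> (forall u v, f (u + v) = f u + f v) -> klin f.
Proof. by move=> hZ hD a u v; rewrite hD hZ. Qed.

Lemma klin0 U V (f : U -> V) : klin f -> f 0 = 0.
Proof.
move=> hf; have := hf 1 0 0; rewrite scaler0 addr0 scale1r => e.
by move: (congr1 (fun x => x - f 0) e); rewrite /= addrK subrr => ->.
Qed.

Lemma klinD U V (f : U -> V) : klin f -> forall u v, f (u + v) = f u + f v.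
Proof. by move=> hf u v; have := hf 1 u v; rewrite !scale1r. Qed.

Lemma klinZ U V (f : U -> V) : klin f -> forall a u, f (a *: u) = a *: f u.
Proof. by move=> hf a u; rewrite -[a *: u]addr0 hf klin0 // addr0. Qed.

Lemma klin_sum U V (f : U -> V) : klin f -> forall I (s : seq I) (P : pred I) (F : I -> U),
  f (\sum_(i <- s | P i) F i) = \sum_(i <- s | P i) f (F i).
Proof.
move=> hf I s P F; apply: (big_morph f (klinD hf) (klin0 hf)).
Qed.

Lemma klin_id U : klin (fun x : U => x).
Proof. by []. Qed.

Lemma klin_comp U V W (g : V -> W) (f : U -> V) :
  klin g -> klin f -> klin (fun x => g (f x)).
Proof. by move=> hg hf a u v; rewrite hf hg. Qed.

Lemma klin_sum_fun U V I (s : seq I) (F : I -> U -> V) :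
  (forall i, klin (F i)) -> klin (fun x => \sum_(i <- s) F i x).
Proof.
move=> hF; apply: klin_of => [a u|u v].
  by rewrite scaler_sumr; apply: eq_bigr => i _; rewrite klinZ.
by rewrite -big_split; apply: eq_bigr => i _; rewrite klinD.
Qed.

Lemma klin_scal U V (f : U -> V) (c : k) : klin f -> klin (fun x => c *: f x).
Proof.
move=> hf; apply: klin_of => [a u|u v]; first by rewrite klinZ // scalerA mulrC -scalerA.
by rewrite klinD // scalerDr.
Qed.

Lemma klin_add U V (f g : U -> V) : klin f -> klin g -> klin (fun x => f x + g x).
Proof.
move=> hf hg; apply: klin_of => [a u|u v]; first by rewrite scalerDr (klinZ hf) (klinZ hg).
by rewrite (klinD hf) (klinD hg) addrACA.
Qed.

Lemma klin_zero U V : klin (fun _ : U => (0 : V)).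
Proof. by move=> a u v; rewrite scaler0 addr0. Qed.

Lemma kbilin1 U V M (b : U -> V -> M) : kbilin b -> forall v, klin (b^~ v).
Proof. by case. Qed.
Lemma kbilin2 U V M (b : U -> V -> M) : kbilin b -> forall u, klin (b u).
Proof. by case. Qed.

Lemma teq2E U V (t t' : seq (U * V)) M (b : U -> V -> M) :
  teq2 t t' -> kbilin b -> \sum_(p <- t) b p.1 p.2 = \sum_(p <- t') b p.1 p.2.
Proof. by move=> h hb; apply: h. Qed.

Lemma teq3E U V W (t t' : seq (U * V * W)) M (b : U -> V -> W -> M) :
  teq3 t t' -> ktrilin b -> \sum_(p <- t) b p.1.1 p.1.2 p.2 = \sum_(p <- t') b p.1.1 p.1.2 p.2.
Proof. by move=> h hb; apply: h. Qed.

Lemma klin_tsum U U' V' M (f : U -> seq (U' * V')) (G : U' -> V' -> M) :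
  tlin f -> kbilin G -> klin (fun x => \sum_(p <- f x) G p.1 p.2).
Proof.
move=> hf hG a u v; rewrite (teq2E (hf a u v) hG) big_cat big_map /=; congr (_ + _).
rewrite scaler_sumr; apply: eq_bigr => p _.
by rewrite (klinZ (kbilin1 hG _)).
Qed.

Lemma tsum0 U U' V' M (f : U -> seq (U' * V')) (G : U' -> V' -> M) :
  tlin f -> kbilin G -> \sum_(p <- f 0) G p.1 p.2 = 0.
Proof. by move=> hf hG; apply: (klin0 (klin_tsum hf hG)). Qed.

End Generic.

Section Generic2.
Variable k : comPzRingType.
Implicit Types U V W M : lmodType k.

Lemma klin_mulr_fun U (R : algType k) (f : U -> R) (w : R) :
  klin f -> klin (fun x => f x * w).
Proof.
move=> hf; apply: klin_of => [a u|u v]; first by rewrite (klinZ hf) -scalerAl.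
by rewrite (klinD hf) mulrDl.
Qed.

Lemma klin_mull_fun U (R : algType k) (f : U -> R) (w : R) :
  klin f -> klin (fun x => w * f x).
Proof.
move=> hf; apply: klin_of => [a u|u v]; first by rewrite (klinZ hf) -scalerAr.
by rewrite (klinD hf) mulrDr.
Qed.

Lemma klin_b1 U V W M (b : V -> W -> M) (f : U -> V) (c : W) :
  kbilin b -> klin f -> klin (fun x => b (f x) c).
Proof. by move=> hb hf; apply: (klin_comp (kbilin1 hb c) hf). Qed.

Lemma klin_b2 U V W M (b : V -> W -> M) (f : U -> W) (c : V) :
  kbilin b -> klin f -> klin (fun x => b c (f x)).
Proof. by move=> hb hf; apply: (klin_comp (kbilin2 hb c) hf). Qed.

Lemma klin_tsum' U U' V' M (f : U -> seq (U' * V')) (F : U' * V' -> M) :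
  tlin f -> kbilin (fun a b => F (a, b)) -> klin (fun x => \sum_(p <- f x) F p).
Proof.
move=> hf hF a u v.
have E : forall x, \sum_(p <- f x) F p = \sum_(p <- f x) F (p.1, p.2).
  by move=> x; apply: eq_bigr => -[].
by rewrite !E; apply: (klin_tsum hf hF).
Qed.

Lemma tlin_comp U V U' V' (g : V -> seq (U' * V')) (f : U -> V) :
  tlin g -> klin f -> tlin (fun x => g (f x)).
Proof. by move=> hg hf a u v; rewrite hf; apply: hg. Qed.

Lemma ktrilin_of U V W M (b : U -> V -> W -> M) :
  (forall v w, klin (fun u => b u v w)) -> (forall u w, klin (fun v => b u v w)) ->
  (forall u v, klin (fun w => b u v w)) -> ktrilin b.
Proof. by move=> h1 h2 h3; split=> //; split. Qed.

Lemma kbilin_of U V M (b : U -> V -> M) :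
  (forall v, klin (fun u => b u v)) -> (forall u, klin (fun v => b u v)) -> kbilin b.
Proof. by move=> h1 h2; split. Qed.

End Generic2.

Ltac lin :=
  cbv beta; simpl;
  first
  [ exact: klin_id
  | exact: klin_zero
  | assumption
  | match goal with hb : kbilin ?b |- _ => exact: (kbilin1 hb) end
  | match goal with hb : kbilin ?b |- _ => exact: (kbilin2 hb) end
  | match goal with hb : ktrilin ?b |- _ => exact: (proj1 hb) end
  | match goal with hb : ktrilin ?b |- _ => exact: (proj1 (proj2 hb)) end
  | match goal with hb : ktrilin ?b |- _ => exact: (proj2 (proj2 hb)) end
  | solve [apply: klin_sum_fun => ?; lin]
  | solve [apply: klin_tsum'; [assumption|apply: kbilin_of => ?; lin]]
  | solve [apply: klin_tsum'; [apply: tlin_comp; [assumption|lin]|apply: kbilin_of => ?; lin]]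
  | match goal with |- klin (fun x => @?f x * ?w) =>
      solve [apply: (@klin_mulr_fun _ _ _ f w); lin] end
  | match goal with |- klin (fun x => ?w * @?f x) =>
      solve [apply: (@klin_mull_fun _ _ _ f w); lin] end
  | match goal with |- klin (fun x => ?c *: @?f x) =>
      solve [apply: (@klin_scal _ _ _ f c); lin] end
  | match goal with |- klin (fun x => @?f x + @?g x) =>
      solve [apply: (@klin_add _ _ _ f g); lin] end
  | match goal with |- klin (fun x => ?b (@?f x) ?c) =>
      match goal with hb : kbilin b |- _ => solve [apply: (@klin_b1 _ _ _ _ _ b f c hb); lin] end end
  | match goal with |- klin (fun x => ?b ?c (@?f x)) =>
      match goal with hb : kbilin b |- _ => solve [apply: (@klin_b2 _ _ _ _ _ b f c hb); lin] end end
  | match goal with |- klin (fun x => ?g (@?f x)) =>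
      match goal with hg : klin g |- _ => solve [apply: (@klin_comp _ _ _ _ g f hg); lin] end end
  ].
Ltac trilin := apply: ktrilin_of => ? ?; lin.
Ltac bilin := apply: kbilin_of => ?; lin.

Section Hopf.
Variable k : comPzRingType.
Variable H : algType k.
Variables (D : H -> seq (H * H)) (eps : H -> k) (S : H -> H).
Hypothesis HDlin : tlin D.
Hypothesis Hcoas : forall h, teq3 [seq (p.1, q.1, q.2) | p <- D h, q <- D p.2]
                  [seq (q.1, q.2, p.2) | p <- D h, q <- D p.1].
Hypothesis Heps : klin (eps : H -> k^o).
Hypothesis HcuL : forall h, \sum_(p <- D h) eps p.1 *: p.2 = h.
Hypothesis HcuR : forall h, \sum_(p <- D h) eps p.2 *: p.1 = h.
Hypothesis HDM : forall h l, teq2 (D (h * l))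
                    [seq (p.1 * q.1, p.2 * q.2) | p <- D h, q <- D l].
Hypothesis HD1 : teq2 (D 1) [:: (1, 1)].
Hypothesis HepsM : forall h l, eps (h * l) = eps h * eps l.
Hypothesis Heps1 : eps 1 = 1.
Hypothesis HS : klin S.
Hypothesis HantL : forall h, \sum_(p <- D h) S p.1 * p.2 = (eps h)%:A.
Hypothesis HantR : forall h, \sum_(p <- D h) p.1 * S p.2 = (eps h)%:A.

Lemma epsZ a h : eps (a *: h) = a * eps h.
Proof. exact: (klinZ Heps). Qed.
Lemma epsD h l : eps (h + l) = eps h + eps l.
Proof. exact: (klinD Heps). Qed.
Lemma eps0 : eps 0 = 0.
Proof. exact: (klin0 Heps). Qed.
Lemma eps_sum I (s : seq I) (F : I -> H) : eps (\sum_(i <- s) F i) = \sum_(i <- s) eps (F i).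
Proof. exact: (big_morph eps epsD eps0). Qed.

Lemma klin_eps_scal (U : lmodType k) (R : lmodType k) (f : U -> H) (v : R) :
  klin f -> klin (fun x => eps (f x) *: v).
Proof.
move=> hf; apply: klin_of => [a u|u w]; first by rewrite (klinZ hf) epsZ scalerA.
by rewrite (klinD hf) epsD scalerDl.
Qed.

Lemma coas_sum (M : lmodType k) (T : H -> H -> H -> M) h : ktrilin T ->
  \sum_(p <- D h) \sum_(q <- D p.2) T p.1 q.1 q.2 =
  \sum_(p <- D h) \sum_(q <- D p.1) T q.1 q.2 p.2.
Proof.
move=> hT; have := teq3E (Hcoas h) hT.
by rewrite !big_allpairs_dep.
Qed.

Lemma DM_sum (M : lmodType k) (b : H -> H -> M) h l : kbilin b ->
  \sum_(p <- D (h * l)) b p.1 p.2 = \sum_(p <- D h) \sum_(q <- D l) b (p.1 * q.1) (p.2 * q.2).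
Proof. by move=> hb; rewrite (teq2E (HDM h l) hb) big_allpairs_dep. Qed.

Lemma D1_sum (M : lmodType k) (b : H -> H -> M) : kbilin b ->
  \sum_(p <- D 1) b p.1 p.2 = b 1 1.
Proof. by move=> hb; rewrite (teq2E HD1 hb) big_seq1. Qed.

Lemma S1 : S 1 = 1.
Proof.
have hb : kbilin (fun x y : H => S x * y) by bilin.
by have := HantL 1; rewrite (D1_sum hb) Heps1 scale1r mulr1.
Qed.

Lemma cuL_sum (M : lmodType k) (f : H -> M) h : klin f ->
  \sum_(p <- D h) eps p.1 *: f p.2 = f h.
Proof.
move=> hf; rewrite -{2}(HcuL h) (klin_sum hf); apply: eq_bigr => p _.
by rewrite (klinZ hf).
Qed.

Lemma cuR_sum (M : lmodType k) (f : H -> M) h : klin f ->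
  \sum_(p <- D h) eps p.2 *: f p.1 = f h.
Proof.
move=> hf; rewrite -{2}(HcuR h) (klin_sum hf); apply: eq_bigr => p _.
by rewrite (klinZ hf).
Qed.


Definition conv (F G : H -> H -> H) h l :=
  \sum_(p <- D h) \sum_(q <- D l) F p.1 q.1 * G p.2 q.2.

Lemma conv_ext F F' G G' h l : (forall x y, F x y = F' x y) -> (forall x y, G x y = G' x y) ->
  conv F G h l = conv F' G' h l.
Proof.
by move=> eF eG; apply: eq_bigr => p _; apply: eq_bigr => q _; rewrite eF eG.
Qed.

Lemma conv_assoc F G K h l : kbilin F -> kbilin G -> kbilin K ->
  conv (conv F G) K h l = conv F (conv G K) h l.
Proof.
move=> hF hG hK; rewrite /conv.
transitivity (\sum_(p <- D h) \sum_(p' <- D p.1) \sum_(q <- D l) \sum_(q' <- D q.2)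
   F p'.1 q.1 * G p'.2 q'.1 * K p.2 q'.2).
  apply: eq_bigr => p _.
  transitivity (\sum_(p' <- D p.1) \sum_(q <- D l) \sum_(q' <- D q.1)
     F p'.1 q'.1 * G p'.2 q'.2 * K p.2 q.2).
    transitivity (\sum_(q <- D l) \sum_(p' <- D p.1) \sum_(q' <- D q.1)
       F p'.1 q'.1 * G p'.2 q'.2 * K p.2 q.2).
      apply: eq_bigr => q _; rewrite mulr_suml; apply: eq_bigr => p' _; by rewrite mulr_suml.
    by rewrite exchange_big.
  apply: eq_bigr => p' _.
  apply: esym; apply: (coas_sum (T := fun x y z => F p'.1 x * G p'.2 y * K p.2 z)).
  trilin.
transitivity (\sum_(p <- D h) \sum_(p' <- D p.2) \sum_(q <- D l) \sum_(q' <- D q.2)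
   F p.1 q.1 * G p'.1 q'.1 * K p'.2 q'.2).
  apply: esym; apply: (coas_sum (T := fun x y z => \sum_(q <- D l) \sum_(q' <- D q.2)
   F x q.1 * G y q'.1 * K z q'.2)).
  trilin.
apply: eq_bigr => p _; rewrite exchange_big; apply: eq_bigr => q _.
rewrite mulr_sumr; apply: eq_bigr => p' _; rewrite mulr_sumr; apply: eq_bigr => q' _.
by rewrite mulrA.
Qed.

Definition Eu (x y : H) : H := (eps x * eps y)%:A.

Lemma conv_unitL F h l : kbilin F -> conv Eu F h l = F h l.
Proof.
move=> hF; rewrite /conv /Eu.
transitivity (\sum_(p <- D h) eps p.1 *: F p.2 l); last first.
  by apply: (cuL_sum (f := fun x => F x l)); lin.
apply: eq_bigr => p _; rewrite -(cuL_sum (f := F p.2)); last by lin.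
rewrite scaler_sumr; apply: eq_bigr => q _.
by rewrite mulr_algl scalerA.
Qed.

Lemma conv_unitR F h l : kbilin F -> conv F Eu h l = F h l.
Proof.
move=> hF; rewrite /conv /Eu.
transitivity (\sum_(p <- D h) eps p.2 *: F p.1 l); last first.
  by apply: (cuR_sum (f := fun x => F x l)); lin.
apply: eq_bigr => p _; rewrite -(cuR_sum (f := F p.1)); last by lin.
rewrite scaler_sumr; apply: eq_bigr => q _.
by rewrite mulr_algr scalerA.
Qed.

Lemma S_mul h l : S (h * l) = S l * S h.
Proof.
pose N x y := S (x * y); pose m (x y : H) := x * y; pose R x y := S y * S x.
have hN : kbilin N by rewrite /N; bilin.
have hm : kbilin m by rewrite /m; bilin.
have hR : kbilin R by rewrite /R; bilin.
have e1 : forall x y, conv m N x y = Eu x y.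
  move=> x y; rewrite /conv /m /N /Eu -HepsM -HantR.
  apply: esym; apply: (DM_sum (b := fun u v => u * S v)); bilin.
have e2 : forall x y, conv R m x y = Eu x y.
  move=> x y; rewrite /conv /m /R /Eu.
  rewrite exchange_big /=.
  transitivity (\sum_(q <- D y) S q.1 * (eps x)%:A * q.2).
    apply: eq_bigr => q _; rewrite -HantL mulr_sumr mulr_suml; apply: eq_bigr => p _.
    by rewrite !mulrA.
  rewrite -(scalerA (eps x) (eps y) 1) -(HantL y) scaler_sumr; apply: eq_bigr => q _.
  by rewrite mulr_algr -scalerAl.
transitivity (conv Eu N h l); first by rewrite conv_unitL.
transitivity (conv (conv R m) N h l).
  by apply: conv_ext => // x y; rewrite e2.
rewrite conv_assoc //.
transitivity (conv R Eu h l); last by rewrite conv_unitR.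
by apply: conv_ext => // x y; rewrite e1.
Qed.


Lemma sum_mulr_lin (M : lmodType k) (c : H -> H -> M) u I (s : seq I) (F : I -> H) :
  kbilin c -> \sum_(i <- s) c u (F i) = c u (\sum_(i <- s) F i).
Proof. by move=> hc; rewrite (klin_sum (kbilin2 hc u)). Qed.

Lemma sum_mull_lin (M : lmodType k) (c : H -> H -> M) u I (s : seq I) (F : I -> H) :
  kbilin c -> \sum_(i <- s) c (F i) u = c (\sum_(i <- s) F i) u.
Proof. by move=> hc; rewrite (klin_sum (kbilin1 hc u)). Qed.

Lemma DR_unit (M : lmodType k) (c : H -> H -> M) h : kbilin c ->
  \sum_(q <- D h) \sum_(y <- D q.1) \sum_(r <- D q.2) c (y.1 * S r.2) (y.2 * S r.1)
  = eps h *: c 1 1.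
Proof.
move=> hc.
transitivity (\sum_(q <- D h) \sum_(y <- D q.2) \sum_(r <- D y.2) c (q.1 * S r.2) (y.1 * S r.1)).
  apply: esym; apply: (coas_sum (T := fun a b d => \sum_(r <- D d) c (a * S r.2) (b * S r.1))).
  trilin.
transitivity (\sum_(q <- D h) \sum_(y <- D q.2) \sum_(r <- D y.1) c (q.1 * S y.2) (r.1 * S r.2)).
  apply: eq_bigr => q _.
  apply: (coas_sum (T := fun b d e => c (q.1 * S e) (b * S d))).
  trilin.
transitivity (\sum_(q <- D h) \sum_(y <- D q.2) eps y.1 *: c (q.1 * S y.2) 1).
  apply: eq_bigr => q _; apply: eq_bigr => y _.
  by rewrite (sum_mulr_lin _ _ _ hc) HantR (klinZ (kbilin2 hc _)).
transitivity (\sum_(q <- D h) c (q.1 * S q.2) 1).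
  apply: eq_bigr => q _; apply: (cuL_sum (f := fun w => c (q.1 * S w) 1)); lin.
by rewrite (sum_mull_lin _ _ _ hc) HantR (klinZ (kbilin1 hc _)).
Qed.

Lemma D_S (M : lmodType k) (b : H -> H -> M) h : kbilin b ->
  \sum_(x <- D (S h)) b x.1 x.2 = \sum_(q <- D h) b (S q.2) (S q.1).
Proof.
move=> hb.
transitivity (\sum_(p <- D h) eps p.2 *: \sum_(x <- D (S p.1)) b x.1 x.2).
  apply: esym; apply: (cuR_sum (f := fun z => \sum_(x <- D (S z)) b x.1 x.2)); lin.
transitivity (\sum_(p <- D h) \sum_(x <- D (S p.1)) \sum_(q <- D p.2)
   \sum_(y <- D q.1) \sum_(r <- D q.2) b (x.1 * (y.1 * S r.2)) (x.2 * (y.2 * S r.1))).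
  apply: eq_bigr => p _; rewrite scaler_sumr; apply: eq_bigr => x _.
  have hc : kbilin (fun u v => b (x.1 * u) (x.2 * v)) by bilin.
  by rewrite (DR_unit _ hc) !mulr1.
transitivity (\sum_(p <- D h) \sum_(q <- D p.2) \sum_(x <- D (S p.1))
   \sum_(y <- D q.1) \sum_(r <- D q.2) b (x.1 * y.1 * S r.2) (x.2 * y.2 * S r.1)).
  apply: eq_bigr => p _; rewrite exchange_big; apply: eq_bigr => q _.
  apply: eq_bigr => x _; apply: eq_bigr => y _; apply: eq_bigr => r _.
  by rewrite !mulrA.
transitivity (\sum_(p <- D h) \sum_(q <- D p.1) \sum_(x <- D (S q.1))
   \sum_(y <- D q.2) \sum_(r <- D p.2) b (x.1 * y.1 * S r.2) (x.2 * y.2 * S r.1)).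
  apply: (coas_sum (T := fun a c d => \sum_(x <- D (S a))
   \sum_(y <- D c) \sum_(r <- D d) b (x.1 * y.1 * S r.2) (x.2 * y.2 * S r.1))).
  apply: ktrilin_of => ? ? /=.
  - apply: klin_tsum'; first by apply: tlin_comp.
    bilin.
  - lin.
  - lin.
transitivity (\sum_(p <- D h) eps p.1 *: \sum_(r <- D p.2) b (S r.2) (S r.1)); last first.
  apply: (cuL_sum (f := fun z => \sum_(r <- D z) b (S r.2) (S r.1))); lin.
apply: eq_bigr => p _; rewrite scaler_sumr.
transitivity (\sum_(r <- D p.2) \sum_(q <- D p.1) \sum_(x <- D (S q.1))
   \sum_(y <- D q.2) b (x.1 * y.1 * S r.2) (x.2 * y.2 * S r.1)).
  transitivity (\sum_(q <- D p.1) \sum_(x <- D (S q.1)) \sum_(r <- D p.2)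
   \sum_(y <- D q.2) b (x.1 * y.1 * S r.2) (x.2 * y.2 * S r.1)).
    by apply: eq_bigr => q _; apply: eq_bigr => x _; rewrite exchange_big.
  transitivity (\sum_(q <- D p.1) \sum_(r <- D p.2) \sum_(x <- D (S q.1))
   \sum_(y <- D q.2) b (x.1 * y.1 * S r.2) (x.2 * y.2 * S r.1)).
    by apply: eq_bigr => q _; rewrite exchange_big.
  by rewrite exchange_big.
apply: eq_bigr => r _.
have hc : kbilin (fun u v => b (u * S r.2) (v * S r.1)) by bilin.
transitivity (\sum_(q <- D p.1) \sum_(w <- D (S q.1 * q.2)) b (w.1 * S r.2) (w.2 * S r.1)).
  apply: eq_bigr => q _; apply: esym.
  exact: (DM_sum (b := fun u v => b (u * S r.2) (v * S r.1))).
have hL : klin (fun z => \sum_(w <- D z) b (w.1 * S r.2) (w.2 * S r.1)) by lin.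
rewrite -(klin_sum hL) HantL (klinZ hL) (D1_sum hc) !mul1r //.
Qed.


Lemma antR_swap (invS : forall h, S (S h) = h) h :
  \sum_(p <- D h) p.2 * S p.1 = (eps h)%:A.
Proof.
transitivity (S (\sum_(p <- D h) p.1 * S p.2)).
  rewrite (klin_sum HS); apply: eq_bigr => p _; by rewrite S_mul invS.
by rewrite HantR (klinZ HS) S1.
Qed.

Lemma Sinv_mul (g : H -> H) : cancel S g -> cancel g S ->
  forall x y, g (x * y) = g y * g x.
Proof.
move=> gK Kg x y; apply: (can_inj gK); by rewrite S_mul !Kg.
Qed.

Lemma Sinv_ant (g : H -> H) : cancel S g -> cancel g S -> forall h,
  \sum_(p <- D h) g p.2 * p.1 = (eps h)%:A.
Proof.
move=> gK Kg h; apply: (can_inj gK).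
rewrite (klin_sum HS).
transitivity (\sum_(p <- D h) S p.1 * p.2).
  by apply: eq_bigr => p _; rewrite S_mul Kg.
by rewrite HantL (klinZ HS) S1.
Qed.

Section Integral.
Variable A : algType k.
Variable rhoA : A -> seq (H * A).
Hypothesis HrhoLin : tlin rhoA.
Hypothesis HrhoCoas : forall a, teq3 [seq (q.1, q.2, p.2) | p <- rhoA a, q <- D p.1]
                     [seq (p.1, q.1, q.2) | p <- rhoA a, q <- rhoA p.2].
Hypothesis HrhoCu : forall a, \sum_(p <- rhoA a) eps p.1 *: p.2 = a.
Hypothesis HrhoM : forall a b, teq2 (rhoA (a * b))
                       [seq (p.1 * q.1, p.2 * q.2) | p <- rhoA a, q <- rhoA b].
Hypothesis Hrho1 : teq2 (rhoA 1) [:: (1, 1)].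
Variable phi : H -> A.
Hypothesis Hphi : klin phi.
Hypothesis Hcolin : forall h, teq2 (rhoA (phi h)) [seq (p.1, phi p.2) | p <- D h].
Hypothesis Hphi1 : phi 1 = 1.
Hypothesis Hcent : forall h a, phi h * a = a * phi h.

Definition gam h l := phi (h * S l).

Lemma gam_bilin : kbilin gam.
Proof. rewrite /gam; bilin. Qed.

Lemma gam_total c : \sum_(p <- D c) gam p.1 p.2 = (eps c)%:A.
Proof.
rewrite /gam -(klin_sum Hphi) HantR (klinZ Hphi) Hphi1 //.
Qed.

Lemma gam_i a c d :
  \sum_(p <- [seq (q.1, q.2, p.2) | p <- rhoA a, q <- D p.1])
      p.2 * gam (c * p.1.1) (d * p.1.2) = gam c d * a.
Proof.
rewrite big_allpairs_dep /= /gam.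
transitivity (\sum_(p <- rhoA a) eps p.1 *: (p.2 * phi (c * S d))).
  apply: eq_bigr => p _.
  have hF : klin (fun x => p.2 * phi (c * x * S d)) by lin.
  transitivity (\sum_(q <- D p.1) p.2 * phi (c * (q.1 * S q.2) * S d)).
    by apply: eq_bigr => q _; rewrite S_mul !mulrA.
  rewrite -(klin_sum hF) HantR (klinZ hF) mulr1 //.
rewrite Hcent; transitivity (\sum_(p <- rhoA a) (eps p.1 *: p.2) * phi (c * S d)).
  by apply: eq_bigr => p _; rewrite scalerAl.
by rewrite -mulr_suml HrhoCu.
Qed.

Lemma colin_sum (M : lmodType k) (G : H -> A -> M) x : kbilin G ->
  \sum_(q <- rhoA (phi x)) G q.1 q.2 = \sum_(r <- D x) G r.1 (phi r.2).
Proof. by move=> hG; rewrite (teq2E (Hcolin x) hG) big_map. Qed.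

Lemma swap_tr (Htr : forall h l, phi (h * l) = phi (l * h))
  (M : lmodType k) (G : H -> A -> M) a b : kbilin G ->
  \sum_(s <- D a) \sum_(t <- D b) G (s.1 * t.1) (phi (s.2 * t.2)) =
  \sum_(s <- D a) \sum_(t <- D b) G (t.1 * s.1) (phi (s.2 * t.2)).
Proof.
move=> hG.
have hG' : kbilin (fun u v => G u (phi v)) by bilin.
rewrite -(DM_sum _ _ hG') -(colin_sum _ hG) Htr (colin_sum _ hG) (DM_sum _ _ hG') /=.
rewrite exchange_big; apply: eq_bigr => s _; apply: eq_bigr => t _.
by rewrite Htr.
Qed.

Lemma gam_ii_1 (Hinv : forall h, S (S h) = h)
  (Htr : forall h l, phi (h * l) = phi (l * h)) c d :
  teq2 [seq (p.1, gam p.2 d) | p <- D c]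
       [seq (p.2 * q.1, q.2) | p <- D d, q <- rhoA (gam c p.1)].
Proof.
move=> M b hb; rewrite big_map big_allpairs_dep /= /gam.
apply: esym.
transitivity (\sum_(p <- D d) \sum_(r <- D (c * S p.1)) b (p.2 * r.1) (phi r.2)).
  apply: eq_bigr => p _; apply: (colin_sum (G := fun u a => b (p.2 * u) a)); bilin.
transitivity (\sum_(p <- D d) \sum_(s <- D c) \sum_(t <- D (S p.1))
   b (p.2 * (s.1 * t.1)) (phi (s.2 * t.2))).
  apply: eq_bigr => p _; apply: (DM_sum (b := fun u v => b (p.2 * u) (phi v))); bilin.
transitivity (\sum_(p <- D d) \sum_(s <- D c) \sum_(t <- D (S p.1))
   b (p.2 * (t.1 * s.1)) (phi (s.2 * t.2))).
  apply: eq_bigr => p _; apply: (swap_tr Htr (G := fun u a => b (p.2 * u) a)); bilin.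
transitivity (\sum_(p <- D d) \sum_(t <- D p.1) \sum_(s <- D c)
   b (p.2 * (S t.2 * s.1)) (phi (s.2 * S t.1))).
  apply: eq_bigr => p _; rewrite exchange_big /=.
  apply: (D_S (b := fun x y => \sum_(s <- D c) b (p.2 * (x * s.1)) (phi (s.2 * y)))).
  bilin.
transitivity (\sum_(p <- D d) \sum_(t <- D p.2) \sum_(s <- D c)
   b (t.2 * (S t.1 * s.1)) (phi (s.2 * S p.1))).
  apply: esym; apply: (coas_sum (T := fun x y z => \sum_(s <- D c)
     b (z * (S y * s.1)) (phi (s.2 * S x)))).
  trilin.
transitivity (\sum_(p <- D d) eps p.2 *: \sum_(s <- D c) b s.1 (phi (s.2 * S p.1))); last first.
  apply: (cuR_sum (f := fun z => \sum_(s <- D c) b s.1 (phi (s.2 * S z)))); lin.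
apply: eq_bigr => p _; rewrite exchange_big scaler_sumr; apply: eq_bigr => s _.
have hF : klin (fun x => b (x * s.1) (phi (s.2 * S p.1))) by lin.
transitivity (\sum_(t <- D p.2) b (t.2 * S t.1 * s.1) (phi (s.2 * S p.1))).
  by apply: eq_bigr => t _; rewrite mulrA.
by rewrite -(klin_sum hF) antR_swap // (klinZ hF) mul1r.
Qed.

Lemma rho_scalar (Hsc : forall h, exists c, phi h = c%:A)
  (M : lmodType k) (G : H -> A -> M) x : kbilin G ->
  \sum_(q <- rhoA (phi x)) G q.1 q.2 = G 1 (phi x).
Proof.
move=> hG; have [c ->] := Hsc x.
have hF := klin_tsum HrhoLin hG.
rewrite (klinZ hF) (teq2E Hrho1 hG) big_seq1 /=.
by rewrite -(klinZ (kbilin2 hG 1)).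
Qed.

Lemma Sinv_lin (g : H -> H) : cancel S g -> cancel g S -> klin g.
Proof.
move=> gK Kg a u v; apply: (can_inj gK).
by rewrite Kg (klinD HS) (klinZ HS) !Kg.
Qed.

Lemma gam_ii_2 (g : H -> H) (gK : cancel S g) (Kg : cancel g S)
  (Hsc : forall h, exists c, phi h = c%:A) c d :
  teq2 [seq (p.1, gam p.2 d) | p <- D c]
       [seq (p.2 * q.1, q.2) | p <- D d, q <- rhoA (gam c p.1)].
Proof.
move=> M b hb; rewrite big_map big_allpairs_dep /= /gam.
have hg := Sinv_lin gK Kg.
have g1 : g 1 = 1 by rewrite -{1}S1 gK.
transitivity (\sum_(p <- D d) b p.2 (phi (c * S p.1))); last first.
  apply: eq_bigr => p _.
  rewrite (rho_scalar Hsc (G := fun u a => b (p.2 * u) a)) ?mulr1 //; bilin.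
transitivity (\sum_(p <- D c) \sum_(r <- D (p.2 * S d)) b (g r.1 * p.1) (phi r.2)).
  apply: eq_bigr => p _.
  have hG : kbilin (fun u a => b (g u * p.1) a) by bilin.
  by rewrite -(colin_sum _ hG) (rho_scalar Hsc _ hG) /= g1 mul1r.
transitivity (\sum_(p <- D c) \sum_(s <- D p.2) \sum_(t <- D (S d))
   b (g (s.1 * t.1) * p.1) (phi (s.2 * t.2))).
  apply: eq_bigr => p _; apply: (DM_sum (b := fun u v => b (g u * p.1) (phi v))); bilin.
transitivity (\sum_(p <- D c) \sum_(s <- D p.2) \sum_(t <- D d)
   b (t.2 * g s.1 * p.1) (phi (s.2 * S t.1))).
  apply: eq_bigr => p _; apply: eq_bigr => s _.
  transitivity (\sum_(t <- D d) b (g (s.1 * S t.2) * p.1) (phi (s.2 * S t.1))).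
    apply: (D_S (b := fun x y => b (g (s.1 * x) * p.1) (phi (s.2 * y)))); bilin.
  by apply: eq_bigr => t _; rewrite (Sinv_mul gK Kg) gK.
transitivity (\sum_(p <- D c) \sum_(s <- D p.1) \sum_(t <- D d)
   b (t.2 * g s.2 * s.1) (phi (p.2 * S t.1))).
  apply: (coas_sum (T := fun x y z => \sum_(t <- D d) b (t.2 * g y * x) (phi (z * S t.1)))).
  trilin.
transitivity (\sum_(p <- D c) eps p.1 *: \sum_(t <- D d) b t.2 (phi (p.2 * S t.1))); last first.
  apply: (cuL_sum (f := fun z => \sum_(t <- D d) b t.2 (phi (z * S t.1)))); lin.
apply: eq_bigr => p _; rewrite exchange_big scaler_sumr; apply: eq_bigr => t _.
have hF : klin (fun x => b (t.2 * x) (phi (p.2 * S t.1))) by lin.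
transitivity (\sum_(s <- D p.1) b (t.2 * (g s.2 * s.1)) (phi (p.2 * S t.1))).
  by apply: eq_bigr => s _; rewrite mulrA.
by rewrite -(klin_sum hF) (Sinv_ant gK Kg) (klinZ hF) mulr1.
Qed.

Lemma rho_coas_sum (M : lmodType k) (T : H -> H -> A -> M) a : ktrilin T ->
  \sum_(s <- rhoA a) \sum_(t <- D s.1) T t.1 t.2 s.2 =
  \sum_(s <- rhoA a) \sum_(t <- rhoA s.2) T s.1 t.1 t.2.
Proof. by move=> hT; have := teq3E (HrhoCoas a) hT; rewrite !big_allpairs_dep. Qed.

Section Sep.
Variable gamma : H -> H -> A.
Hypothesis Hgb : kbilin gamma.
Hypothesis Hgi : forall a c d,
        \sum_(p <- [seq (q.1, q.2, p.2) | p <- rhoA a, q <- D p.1])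
            p.2 * gamma (c * p.1.1) (d * p.1.2) = gamma c d * a.
Hypothesis Hgii : forall c d,
        teq2 [seq (p.1, gamma p.2 d) | p <- D c]
             [seq (p.2 * q.1, q.2) | p <- D d, q <- rhoA (gamma c p.1)].
Hypothesis Hgt : forall c, \sum_(p <- D c) gamma p.1 p.2 = (eps c)%:A.

Local Notation RM := (relHopfMod D eps rhoA).

Definition Pm (M N : RM) (f : M -> N) (m : M) : N :=
  \sum_(p <- rhm_coact m) \sum_(q <- rhm_coact (f p.2)) rhm_act q.2 (gamma p.1 q.1).

Lemma M_coas_sum (M : RM) (X : lmodType k) (T : H -> H -> M -> X) m : ktrilin T ->
  \sum_(p <- rhm_coact m) \sum_(q <- D p.1) T q.1 q.2 p.2 =
  \sum_(p <- rhm_coact m) \sum_(q <- rhm_coact p.2) T p.1 q.1 q.2.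
Proof. by move=> hT; have := teq3E (rhm_coassoc m) hT; rewrite !big_allpairs_dep. Qed.

Lemma M_compat_sum (M : RM) (X : lmodType k) (b : H -> M -> X) m a : kbilin b ->
  \sum_(p <- rhm_coact (rhm_act m a)) b p.1 p.2 =
  \sum_(p <- rhm_coact m) \sum_(q <- rhoA a) b (p.1 * q.1) (rhm_act p.2 q.2).
Proof. by move=> hb; rewrite (teq2E (rhm_compat m a) hb) big_allpairs_dep. Qed.

Lemma hom_sum (M N : RM) (f : M -> N) (X : lmodType k) (b : H -> N -> X) m :
  relHopf_hom f -> kbilin b ->
  \sum_(p <- rhm_coact (f m)) b p.1 p.2 = \sum_(p <- rhm_coact m) b p.1 (f p.2).
Proof. by move=> [_ hf] hb; rewrite (teq2E (hf m) hb) big_map. Qed.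

Lemma act_scal (M : RM) (m : M) (c : k) : rhm_act m c%:A = c *: m.
Proof. by rewrite (klinZ (kbilin2 (rhm_act_bilin M) m)) rhm_act1. Qed.

Lemma M_counit_f (M N : RM) (f : M -> N) m : klin f ->
  \sum_(p <- rhm_coact m) eps p.1 *: f p.2 = f m.
Proof.
move=> hf; rewrite -{2}(rhm_counit m) (klin_sum hf); apply: eq_bigr => p _.
by rewrite (klinZ hf).
Qed.

Lemma Pm_lin (M N : RM) (f : M -> N) : klin f -> klin (Pm f).
Proof.
move=> hf; rewrite /Pm.
have hcM : tlin (@rhm_coact _ _ _ _ _ _ M) := @rhm_coact_lin _ _ _ _ _ _ M; have hcN : tlin (@rhm_coact _ _ _ _ _ _ N) := @rhm_coact_lin _ _ _ _ _ _ N.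
have ha := rhm_act_bilin N.
lin.
Qed.

Lemma Pm_id (M N : RM) (f : M -> N) : relHopf_hom f -> forall m, Pm f m = f m.
Proof.
move=> hf m; rewrite /Pm.
have ha := rhm_act_bilin N.
have hfl : klin f by case: hf => -[].
transitivity (\sum_(p <- rhm_coact m) \sum_(q <- rhm_coact p.2) rhm_act (f q.2) (gamma p.1 q.1)).
  apply: eq_bigr => p _.
  apply: (hom_sum (b := fun u n => rhm_act n (gamma p.1 u))) => //; bilin.
transitivity (\sum_(p <- rhm_coact m) \sum_(q <- D p.1) rhm_act (f p.2) (gamma q.1 q.2)).
  apply: esym; apply: (M_coas_sum (T := fun x y z => rhm_act (f z) (gamma x y))).
  trilin.
rewrite -(M_counit_f m hfl); apply: eq_bigr => p _.
by rewrite -(klin_sum (kbilin2 ha (f p.2))) Hgt act_scal.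
Qed.

Lemma Pm_act (M N : RM) (f : M -> N) : Alin f -> forall m a, Pm f (rhm_act m a) = rhm_act (Pm f m) a.
Proof.
move=> [hfl hfa] m a; rewrite /Pm.
have ha := rhm_act_bilin N.
have haM := rhm_act_bilin M.
have hcN : tlin (@rhm_coact _ _ _ _ _ _ N) := @rhm_coact_lin _ _ _ _ _ _ N.
have hG : kbilin (fun x y => \sum_(q <- rhm_coact (f y)) rhm_act q.2 (gamma x q.1)).
  by bilin.
rewrite (M_compat_sum _ _ hG) /=.
transitivity (\sum_(p <- rhm_coact m) \sum_(q <- rhm_coact (f p.2))
   \sum_(s <- rhoA a) \sum_(t <- rhoA s.2) rhm_act q.2 (t.2 * gamma (p.1 * s.1) (q.1 * t.1))).
  apply: eq_bigr => p _.
  transitivity (\sum_(s <- rhoA a) \sum_(q <- rhm_coact (f p.2)) \sum_(t <- rhoA s.2)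
       rhm_act q.2 (t.2 * gamma (p.1 * s.1) (q.1 * t.1))); last by rewrite exchange_big.
  apply: eq_bigr => s _; rewrite hfa.
  rewrite (M_compat_sum (b := fun u n => rhm_act n (gamma (p.1 * s.1) u))) /=; last by bilin.
  by apply: eq_bigr => q _; apply: eq_bigr => t _; rewrite rhm_actM.
rewrite (klin_sum (kbilin1 ha a)); apply: eq_bigr => p _.
rewrite (klin_sum (kbilin1 ha a)); apply: eq_bigr => q _.
rewrite rhm_actM -Hgi big_allpairs_dep /=.
rewrite (klin_sum (kbilin2 ha _)); rewrite -(rho_coas_sum (T := fun x y z =>
   rhm_act q.2 (z * gamma (p.1 * x) (q.1 * y)))); last by trilin.
apply: eq_bigr => s _; by rewrite (klin_sum (kbilin2 ha _)).
Qed.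

Lemma Pm_Alin (M N : RM) (f : M -> N) : Alin f -> Alin (Pm f).
Proof. by move=> hf; split; [apply: Pm_lin; case: hf | exact: Pm_act]. Qed.

Lemma Pm_colin (M N : RM) (f : M -> N) : Alin f -> forall m,
  teq2 (rhm_coact (Pm f m)) [seq (p.1, Pm f p.2) | p <- rhm_coact m].
Proof.
move=> [hfl hfa] m X b hb; rewrite big_map /Pm.
have ha := rhm_act_bilin N.
have hcN : tlin (@rhm_coact _ _ _ _ _ _ N) := @rhm_coact_lin _ _ _ _ _ _ N.
have hcM : tlin (@rhm_coact _ _ _ _ _ _ M) := @rhm_coact_lin _ _ _ _ _ _ M.
have hBc : klin (fun x : N => \sum_(r <- rhm_coact x) b r.1 r.2) by lin.
rewrite (klin_sum hBc).
transitivity (\sum_(p <- rhm_coact m) \sum_(q <- rhm_coact (f p.2)) \sum_(r <- D p.1)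
   b r.1 (rhm_act q.2 (gamma r.2 q.1))).
  apply: eq_bigr => p _; rewrite (klin_sum hBc).
  transitivity (\sum_(q <- rhm_coact (f p.2)) \sum_(r <- rhm_coact q.2)
     \sum_(s <- rhoA (gamma p.1 q.1)) b (r.1 * s.1) (rhm_act r.2 s.2)).
    by apply: eq_bigr => q _; rewrite (M_compat_sum _ _ hb).
  transitivity (\sum_(q <- rhm_coact (f p.2)) \sum_(r <- D q.1)
     \sum_(s <- rhoA (gamma p.1 r.1)) b (r.2 * s.1) (rhm_act q.2 s.2)).
    apply: esym; apply: (M_coas_sum (T := fun x y z =>
       \sum_(s <- rhoA (gamma p.1 x)) b (y * s.1) (rhm_act z s.2))).
    apply: ktrilin_of => ? ? /=.
    - apply: klin_tsum'; first by apply: tlin_comp => //; lin.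
      bilin.
    - lin.
    - lin.
  apply: eq_bigr => q _.
  have hb' : kbilin (fun u a => b u (rhm_act q.2 a)) by bilin.
  have := teq2E (Hgii p.1 q.1) hb'; rewrite big_map big_allpairs_dep /= => <-.
  done.
transitivity (\sum_(p <- rhm_coact m) \sum_(r <- D p.1) \sum_(q <- rhm_coact (f p.2))
   b r.1 (rhm_act q.2 (gamma r.2 q.1))).
  by apply: eq_bigr => p _; rewrite exchange_big.
rewrite (M_coas_sum (T := fun x y z => \sum_(q <- rhm_coact (f z))
   b x (rhm_act q.2 (gamma y q.1)))); last first.
  apply: ktrilin_of => ? ? /=; [lin|lin|].
  apply: klin_tsum'; first by apply: tlin_comp.
  bilin.
apply: eq_bigr => p _.
rewrite (klin_sum (kbilin2 hb _)); apply: eq_bigr => p' _.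
by rewrite (klin_sum (kbilin2 hb _)).
Qed.

Lemma Pm_hom (M N : RM) (f : M -> N) : Alin f -> relHopf_hom (Pm f).
Proof. by move=> hf; split; [exact: Pm_Alin | exact: Pm_colin]. Qed.

Lemma Pm_nat (M' M N N' : RM) (g : M' -> M) (f : M -> N) (h : N -> N') :
  relHopf_hom g -> Alin f -> relHopf_hom h ->
  forall m, Pm (fun x => h (f (g x))) m = h (Pm f (g m)).
Proof.
move=> hg [hfl hfa] hh m; rewrite /Pm.
have hhl : klin h by case: hh => -[].
have hha : forall n a, h (rhm_act n a) = rhm_act (h n) a by case: hh => -[].
have hgl : klin g by case: hg => -[].
have ha := rhm_act_bilin N.
have ha' := rhm_act_bilin N'.
have hcN : tlin (@rhm_coact _ _ _ _ _ _ N) := @rhm_coact_lin _ _ _ _ _ _ N.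
rewrite (hom_sum (b := fun x y => \sum_(q <- rhm_coact (f y)) rhm_act q.2 (gamma x q.1))) //;
  last by bilin.
rewrite (klin_sum hhl); apply: eq_bigr => p _.
rewrite (klin_sum hhl).
rewrite (hom_sum (b := fun u n => rhm_act n (gamma p.1 u))) //; last by bilin.
by apply: eq_bigr => q _; rewrite hha.
Qed.

Lemma sep_main : forget_separable D eps rhoA.
Proof.
exists (@Pm); split.
- move=> M N f hf; exact: Pm_hom.
- move=> M N f hf m; exact: Pm_id.
- move=> M' M N N' g f h hg hf hh m; exact: (Pm_nat hg hf hh).
Qed.

End Sep.

Lemma main_in (Hcase : [/\ forall h, S (S h) = h,
             (forall h a, phi h * a = a * phi h) &
             (forall h l, phi (h * l) = phi (l * h))]
         \/ (bijective S /\ forall h, exists c : k, phi h = c%:A)) :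
  is_total_A_integral D eps rhoA gam /\ forget_separable D eps rhoA.
Proof.
have hii : forall c d, teq2 [seq (p.1, gam p.2 d) | p <- D c]
       [seq (p.2 * q.1, q.2) | p <- D d, q <- rhoA (gam c p.1)].
  case: Hcase => [[Hinv _ Htr]|[[g gK Kg] Hsc]] c d.
    exact: gam_ii_1.
  exact: (gam_ii_2 gK Kg Hsc).
split; first by split; [split; [exact: gam_bilin | exact: gam_i | exact: hii] | exact: gam_total].
exact: (sep_main gam_bilin gam_i hii gam_total).
Qed.

End Integral.
End Hopf.

Theorem corollary3p1p4 (k : comPzRingType) (H : algType k)
  (Delta : H -> seq (H * H)) (eps : H -> k) (S : H -> H)
  (hopfH : is_hopf Delta eps S) (projH : kprojective H)
  (A : algType k) (rhoA : A -> seq (H * A)) (comodA : is_comod_alg Delta eps rhoA)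
  (phi : H -> A) (phi_lin : klin phi)
  (phi_colin : forall h, teq2 (rhoA (phi h)) [seq (p.1, phi p.2) | p <- Delta h])
  (phi1 : phi 1 = 1)
  (hyp : [/\ forall h, S (S h) = h,
             (forall h a, phi h * a = a * phi h) &
             (forall h l, phi (h * l) = phi (l * h))]
         \/ (bijective S /\ forall h, exists c : k, phi h = c%:A)) :
  is_total_A_integral Delta eps rhoA (fun h l => phi (h * S l))
  /\ forget_separable Delta eps rhoA.
Proof.
case: hopfH => [HDlin [Hcoas [Heps [HcuL [HcuR [HDM [HD1 [HepsM [Heps1 [HS [HantL HantR]]]]]]]]]]].
case: comodA => HrhoLin HrhoCoas HrhoCu HrhoM Hrho1.
have Hcent : forall h a, phi h * a = a * phi h.
  case: hyp => [[_ Hc _] | [_ Hsc]] // h a.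
  by have [c ->] := Hsc h; rewrite mulr_algl mulr_algr.
exact: (@main_in k H Delta eps S HDlin Hcoas HcuL HcuR HDM HD1 HepsM Heps1 HS HantL HantR
   A rhoA HrhoLin HrhoCoas HrhoCu Hrho1 phi phi_lin phi_colin phi1 Hcent hyp).
Qed.
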